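(* Let $n\ge 3$ and consider the right lobster $\mathcal{L}^{1,1}_{n-2}$. For $1\le i<j\le n$ let $M_{j,i}$ be the unique tableau in $\mathrm{SET}(\mathcal{L}^{1,1}_{n-2})$ with $j$ in the top claw cell and $i$ in the bottom claw cell. Then the poset $\mathrm{SET}(\mathcal{L}^{1,1}_{n-2})$ is isomorphic to the root poset of the root system $A_{n-1}$, and also to the poset $\{(i,j)\in\mathbb{N}^2: i+j\le n-2\}$ ordered by $(i,j)\ge(k,\ell)$ iff $k\ge i$ and $\ell\ge j$. It has exactly $n-1$ minimal elements, namely $M_{i+1,i}$ for $1\le i\le n-1$; all minimal elements have the same number of inversions; and $|\mathrm{SET}(\mathcal{L}^{1,1}_{n-2})|=\binom{n}{2}$.
   Context: For positive integers $b,c_1,c_2$, the right lobster $\mathcal{L}^{c_1,c_2}_b$ is the skew diagram $\alpha/\beta$ with $\alpha=(b+1+c_2,\,b+1,\,b+1+c_1)$ and $\beta=(b+1,1,b+1)$ (rows numbered from the bottom; $\alpha/\beta$ consists of the cells in row $i$, column $j$ with $\beta_i<j\le\alpha_i$). Thus it has three rows: the bottom row with $c_2$ cells in columns $b+2,\ldots,b+1+c_2$, the middle row (the body) with $b$ cells in columns $2,\ldots,b+1$, and the top row with $c_1$ cells in columns $b+2,\ldots,b+1+c_1$; the top and bottom rows are the claws. $\mathrm{SET}$ of a skew shape with $m$ cells is the set of bijective fillings with $1,\ldots,m$ whose rows increase left to right and columns increase bottom to top. For $1\le i\le m-1$, $\pi_i(T)=T$ if $i+1$ is in a strictly higher row than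 $i$, $\pi_i(T)=s_i(T)$ (swap $i$ and $i+1$) if $i+1$ is in a strictly lower row than $i$, and $\pi_i(T)=0$ otherwise; the poset order is $T\le T'$ iff $T'$ is obtained from $T$ by a sequence of operators $\pi_i$ (all intermediate results nonzero). The number of inversions of a tableau is the number of inversions of its reading word, obtained by reading rows right to left, from the top row down. The root poset of $A_{n-1}$ is the set of positive roots $\{e_i-e_j:1\le i<j\le n\}$ with $\gamma\le\delta$ iff $\delta-\gamma$ is a nonnegative integer combination of the simple roots $e_k-e_{k+1}$. *)

(* Defs.v *)
From mathcomp Require Import all_boot all_order all_algebra.
Set Implicit Arguments. Unset Strict Implicit. Unset Printing Implicit Defensive.
Import GRing.Theory Num.Theory.

(* A cell is (row, column); rows are numbered from the bottom starting at 1. *)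
Definition cell := (nat * nat)%type.

(* Cells of the skew diagram al/be: row r (1-based), columns be_r < c <= al_r.
   al and be list the rows from the bottom up. *)
Definition skew_cells (al be : seq nat) : seq cell :=
  flatten [seq [seq (r.+1, c) | c <- iota (nth 0 be r).+1 (nth 0 al r - nth 0 be r)]
          | r <- iota 0 (size al)].

(* A bijective filling T with 1..m is encoded by the word w : seq cell whose
   (k-1)-th item is the cell containing k.  The entry of cell c is then: *)
Definition entry (w : seq cell) (c : cell) : nat := (index c w).+1.

Definition row_of (w : seq cell) (k : nat) : nat := (nth (0, 0) w k.-1).1.

Definition is_SET (al be : seq nat) (w : seq cell) : Prop :=
  perm_eq w (skew_cells al be) /\
  (forall c d, c \in w -> d \in w -> c.1 = d.1 -> c.2 < d.2 -> entry w c < entry w d) /\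
  (forall c d, c \in w -> d \in w -> c.2 = d.2 -> c.1 < d.1 -> entry w c < entry w d).

(* s_i : swap the values i and i+1 (i.e. positions i-1 and i of the word). *)
Definition swap_vals (w : seq cell) (i : nat) : seq cell :=
  [seq nth (0, 0) w (if j == i.-1 then i else if j == i then i.-1 else j)
  | j <- iota 0 (size w)].

(* pi_i ; None encodes the value 0. *)
Definition pi_op (i : nat) (w : seq cell) : option (seq cell) :=
  if row_of w i < row_of w i.+1 then Some w
  else if row_of w i.+1 < row_of w i then Some (swap_vals w i)
  else None.

Fixpoint apply_pis (ps : seq nat) (w : seq cell) : option (seq cell) :=
  match ps with
  | [::] => Some w
  | i :: ps' =>
      if (0 < i) && (i < size w) then
        match pi_op i w with
        | Some w' => apply_pis ps' w'
        | None => None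
        end
      else None
  end.

Definition tab_le (w w' : seq cell) : Prop := exists ps, apply_pis ps w = Some w'.

Definition reading_cells (al be : seq nat) : seq cell :=
  flatten [seq rev [seq (r.+1, c) | c <- iota (nth 0 be r).+1 (nth 0 al r - nth 0 be r)]
          | r <- rev (iota 0 (size al))].

Definition reading_word (al be : seq nat) (w : seq cell) : seq nat :=
  [seq entry w c | c <- reading_cells al be].

Definition inversions (s : seq nat) : nat :=
  \sum_(j < size s) \sum_(i < j) (nth 0 s j < nth 0 s i).

Definition inv_tab (al be : seq nat) (w : seq cell) : nat :=
  inversions (reading_word al be w).

Definition lobster_alpha (b c1 c2 : nat) : seq nat := [:: b.+1 + c2; b.+1; b.+1 + c1].
Definition lobster_beta (b c1 c2 : nat) : seq nat := [:: b.+1; 1; b.+1].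

Definition top_claw (b : nat) : cell := (3, b.+2).
Definition bottom_claw (b : nat) : cell := (1, b.+2).

Definition lobSET (n : nat) (w : seq cell) : Prop :=
  is_SET (lobster_alpha (n - 2) 1 1) (lobster_beta (n - 2) 1 1) w.

Definition lob_inv (n : nat) (w : seq cell) : nat :=
  inv_tab (lobster_alpha (n - 2) 1 1) (lobster_beta (n - 2) 1 1) w.

Definition is_M (n j i : nat) (w : seq cell) : Prop :=
  lobSET n w /\ entry w (top_claw (n - 2)) = j /\ entry w (bottom_claw (n - 2)) = i.

Definition minimal {A : Type} (P : A -> Prop) (le : A -> A -> Prop) (x : A) : Prop :=
  P x /\ forall y, P y -> le y x -> y = x.

Definition order_iso {A B : Type} (PA : A -> Prop) (leA : A -> A -> Prop)
    (PB : B -> Prop) (leB : B -> B -> Prop) : Prop :=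
  exists f : A -> B,
    (forall a, PA a -> PB (f a)) /\
    (forall a a', PA a -> PA a' -> f a = f a' -> a = a') /\
    (forall b, PB b -> exists2 a, PA a & f a = b) /\
    (forall a a', PA a -> PA a' -> (leA a a' <-> leB (f a) (f a'))).

(* Root poset of A_{n-1}: (i, j) with 1 <= i < j <= n stands for e_i - e_j. *)
Definition is_pos_root (n : nat) (p : nat * nat) : Prop := 0 < p.1 < p.2 /\ p.2 <= n.

Definition root_vec (p : nat * nat) (t : nat) : int :=
  ((t == p.1) : nat)%:Z - ((t == p.2) : nat)%:Z.

Definition simple_root (k t : nat) : int := root_vec (k, k.+1) t.

Definition root_le (n : nat) (g d : nat * nat) : Prop :=
  exists c : nat -> nat, forall t, 0 < t <= n ->
    (root_vec d t - root_vec g t = \sum_(1 <= k < n) (c k)%:Z * simple_root k t)%R.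

Definition grid (n : nat) (p : nat * nat) : Prop := p.1 + p.2 <= n - 2.
Definition grid_le (p q : nat * nat) : Prop := q.1 <= p.1 /\ q.2 <= p.2.

(* Main.v *)
Require Import Defs.
From mathcomp Require Import all_boot all_order all_algebra zify.
Set Implicit Arguments. Unset Strict Implicit. Unset Printing Implicit Defensive.

Definition al b := lobster_alpha b 1 1.
Definition be b := lobster_beta b 1 1.
Definition SETb b w := is_SET (al b) (be b) w.
Definition cells b : seq cell := (1, b.+2) :: [seq (2, c) | c <- iota 2 b] ++ [:: (3, b.+2)].

Lemma cellsE b : skew_cells (al b) (be b) = cells b.
Proof. rewrite /skew_cells /al /be /= addn1 subSnn subn1 /= //. Qed.
Lemma rcellsE b : reading_cells (al b) (be b) =
  (3, b.+2) :: rev [seq (2, c) | c <- iota 2 b] ++ [:: (1, b.+2)].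
Proof. rewrite /reading_cells /al /be /= addn1 subSnn subn1 /= //. Qed.

Lemma mem_body b r c : ((r, c) \in [seq (2, c) | c <- iota 2 b]) = (r == 2) && (2 <= c <= b.+1).
Proof.
apply/mapP/andP => [[x]|[/eqP-> H]]; first by rewrite mem_iota => H [-> ->]; split => //; lia.
by exists c => //; rewrite mem_iota; lia.
Qed.

Lemma mem_cells b r c : ((r, c) \in cells b) =
  [|| (r == 1) && (c == b.+2), (r == 3) && (c == b.+2) | (r == 2) && (2 <= c <= b.+1)].
Proof.
rewrite /cells inE mem_cat mem_seq1 mem_body !xpair_eqE.
by case: (r == 1) (r == 3) (r == 2) (c == b.+2) (2 <= c <= b.+1) => [] [] [] [] [].
Qed.

Lemma uniq_cells b : uniq (cells b).
Proof.
rewrite /cells cons_uniq mem_cat mem_seq1 mem_body /= cat_uniq /= map_inj_uniq ?iota_uniq //=.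
  by rewrite mem_body.
by move=> x y [].
Qed.

Lemma size_cells b : size (cells b) = b.+2.
Proof. by rewrite /= size_cat size_map size_iota addn1. Qed.

Section SetFacts.
Variables (b : nat) (w : seq cell).
Hypothesis Hw : SETb b w.

Lemma Sperm : perm_eq w (cells b).
Proof. by case: Hw; rewrite cellsE. Qed.
Lemma Suniq : uniq w.
Proof. by rewrite (perm_uniq Sperm) uniq_cells. Qed.
Lemma Ssize : size w = b.+2.
Proof. by rewrite (perm_size Sperm) size_cells. Qed.
Lemma Smem c : (c \in w) = (c \in cells b).
Proof. exact: (perm_mem Sperm c). Qed.
Lemma Sentry_inj c d : c \in w -> d \in w -> entry w c = entry w d -> c = d.
Proof. by move=> Hc Hd [E]; rewrite -(nth_index (0,0) Hc) E nth_index. Qed.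
Lemma Sentry_le c : c \in w -> entry w c <= b.+2.
Proof. by rewrite -index_mem Ssize. Qed.
Lemma Snth_entry k : k < b.+2 -> entry w (nth (0,0) w k) = k.+1.
Proof. by move=> H; rewrite /entry index_uniq ?Ssize ?Suniq. Qed.
Lemma Snth_mem k : k < b.+2 -> nth (0,0) w k \in w.
Proof. by move=> H; rewrite mem_nth ?Ssize. Qed.
End SetFacts.

Definition eb b w := entry w (1, b.+2).
Definition et b w := entry w (3, b.+2).
Definition L b w := [seq entry w (2, c) | c <- iota 2 b].

Lemma code_range b w : SETb b w -> 0 < eb b w < et b w /\ et b w <= b.+2.
Proof.
move=> Hw; have m3 : (3, b.+2) \in w by rewrite (Smem Hw) mem_cells !eqxx /= ?orbT.
have m1 : (1, b.+2) \in w by rewrite (Smem Hw) mem_cells !eqxx.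
split; last exact: Sentry_le.
rewrite {1}/eb /entry ltn0Sn /=; case: Hw => _ [_ H]; exact: H.
Qed.

Lemma L_sorted b w : SETb b w -> sorted ltn (L b w).
Proof.
move=> Hw; rewrite /L sorted_map.
apply: (@sub_in_sorted _ (mem (iota 2 b))); last exact: iota_ltn_sorted.
  move=> x y; rewrite !mem_iota => Hx Hy /= Hxy; case: (Hw) => _ [H _]; apply: H => //.
    by rewrite (Smem Hw) mem_cells; apply/or3P; constructor 3; apply/andP; split => //; lia.
  by rewrite (Smem Hw) mem_cells; apply/or3P; constructor 3; apply/andP; split => //; lia.
by apply/allP.
Qed.

Lemma L_mem b w x : SETb b w ->
  (x \in L b w) = [&& 0 < x, x <= b.+2, x != eb b w & x != et b w].
Proof.
move=> Hw; have m3 : (3, b.+2) \in w by rewrite (Smem Hw) mem_cells !eqxx /= ?orbT.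
have m1 : (1, b.+2) \in w by rewrite (Smem Hw) mem_cells !eqxx.
apply/mapP/and4P => [[c Hc ->]|[H0 H1 H2 H3]].
  have mc : (2, c) \in w.
    by rewrite (Smem Hw) mem_cells; apply/or3P; constructor 3; apply/andP; split => //; move: Hc; rewrite mem_iota; lia.
  split => //; first exact: Sentry_le.
    by apply/eqP => /(Sentry_inj mc m1) [].
  by apply/eqP => /(Sentry_inj mc m3) [].
have Hk : x.-1 < b.+2 by lia.
move: (Snth_mem Hw Hk) (Snth_entry Hw Hk); case E: (nth _ _ _) => [r c] Hm He.
have ex : x = x.-1.+1 by lia.
move: (Hm); rewrite (Smem Hw) mem_cells => /or3P [/andP [/eqP r1 /eqP c1]|/andP [/eqP r1 /eqP c1]|/andP [/eqP r1 Hc]].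
- by move: H2; rewrite /eb ex -He r1 c1 eqxx.
- by move: H3; rewrite /et ex -He r1 c1 eqxx.
exists c; first by rewrite mem_iota; lia.
by rewrite -r1 He.
Qed.

Lemma L_eq b w w' : SETb b w -> SETb b w' -> eb b w = eb b w' -> et b w = et b w' ->
  L b w = L b w'.
Proof.
move=> Hw Hw' E1 E2; apply: (irr_sorted_eq ltn_trans ltnn); try exact: L_sorted.
by move=> x; rewrite (L_mem _ Hw) (L_mem _ Hw') E1 E2.
Qed.

Lemma Suniqueness b w w' : SETb b w -> SETb b w' -> eb b w = eb b w' -> et b w = et b w' ->
  w = w'.
Proof.
move=> Hw Hw' E1 E2.
have HL := L_eq Hw Hw' E1 E2; move/eq_in_map: HL => HL.
have Hi : forall c, c \in cells b -> index c w = index c w'.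
  case=> r c; rewrite mem_cells => /or3P [/andP [/eqP-> /eqP->]|/andP [/eqP-> /eqP->]|/andP [/eqP-> Hc]].
  - by move: E1; rewrite /eb /entry => [[]].
  - by move: E2; rewrite /et /entry => [[]].
  by have [] : entry w (2, c) = entry w' (2, c) by apply: HL; rewrite mem_iota; lia.
apply: (@eq_from_nth _ (0,0)); first by rewrite (Ssize Hw) (Ssize Hw').
move=> p; rewrite (Ssize Hw) => Hp.
have mp := Snth_mem Hw Hp.
have := Hi (nth (0,0) w p); rewrite -(Smem Hw) => /(_ mp).
rewrite index_uniq ?(Ssize Hw) ?(Suniq Hw) // => Ep.
by rewrite {2}Ep nth_index // (Smem Hw') -(Smem Hw).
Qed.

Definition g b i j k : cell :=
  if k == i then (1, b.+2) else if k == j then (3, b.+2)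
  else (2, k.+1 - (i < k) - (j < k)).
Definition mk b i j := [seq g b i j k | k <- iota 1 b.+2].
Definition valid b i j := [&& 0 < i, i < j & j <= b.+2].

Ltac crush := rewrite /g; repeat (case: ifP => /eqP ?); try (congr pair; lia); try lia.

Section Mk.
Variables (b i j : nat).
Hypothesis V : valid b i j.

Lemma size_mk : size (mk b i j) = b.+2.
Proof. by rewrite size_map size_iota. Qed.

Lemma nth_mk p : p < b.+2 -> nth (0,0) (mk b i j) p = g b i j p.+1.
Proof. by move=> H; rewrite (nth_map 0) ?size_iota // nth_iota // add1n. Qed.

Lemma g_inj k k' : 0 < k <= b.+2 -> 0 < k' <= b.+2 -> g b i j k = g b i j k' -> k = k'.
Proof. move: V => /and3P [V1 V2 V3] H1 H2; crush; case=> *; lia. Qed.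

Lemma g_cells k : 0 < k <= b.+2 -> g b i j k \in cells b.
Proof.
move: V => /and3P [V1 V2 V3] H1.
rewrite /g; case: ifP => /eqP Hi; first by rewrite mem_cells !eqxx.
case: ifP => /eqP Hj; first by rewrite mem_cells !eqxx /= ?orbT.
rewrite mem_cells; apply/or3P; constructor 3; apply/andP; split => //.
apply/andP; split; lia.
Qed.

Lemma uniq_mk : uniq (mk b i j).
Proof.
rewrite map_inj_in_uniq ?iota_uniq // => x y; rewrite !mem_iota => Hx Hy.
apply: g_inj; lia.
Qed.

Lemma mem_mk c : reflect (exists2 k, 0 < k <= b.+2 & c = g b i j k) (c \in mk b i j).
Proof.
apply: (iffP mapP) => [[k Hk ->]|[k Hk ->]]; exists k => //; move: Hk; rewrite mem_iota; lia.
Qed.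

Lemma perm_mk : perm_eq (mk b i j) (cells b).
Proof.
apply: uniq_perm; [exact: uniq_mk | exact: uniq_cells |].
have Hs : {subset mk b i j <= cells b} by move=> c /mem_mk [k Hk ->]; exact: g_cells.
by have [] := uniq_min_size uniq_mk Hs; rewrite size_mk size_cells.
Qed.

Lemma entry_mk k : 0 < k <= b.+2 -> entry (mk b i j) (g b i j k) = k.
Proof.
move=> H; have -> : g b i j k = nth (0,0) (mk b i j) k.-1 by rewrite nth_mk; [congr g; lia | lia].
by rewrite /entry index_uniq ?size_mk ?uniq_mk; lia.
Qed.

Lemma g_i : g b i j i = (1, b.+2).
Proof. by rewrite /g eqxx. Qed.
Lemma g_j : g b i j j = (3, b.+2).
Proof. by move: V => /and3P [V1 V2 V3]; rewrite /g eqxx ifN_eq //; rewrite eq_sym; lia. Qed.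

Lemma eb_mk : eb b (mk b i j) = i.
Proof. by move: (V) => /and3P [V1 V2 V3]; rewrite /eb -g_i entry_mk //; lia. Qed.
Lemma et_mk : et b (mk b i j) = j.
Proof. by move: (V) => /and3P [V1 V2 V3]; rewrite /et -g_j entry_mk //; lia. Qed.

Lemma SET_mk : SETb b (mk b i j).
Proof.
move: (V) => /and3P [V1 V2 V3].
split; first by rewrite cellsE perm_mk.
split => c d /mem_mk [k Hk ->] /mem_mk [k' Hk' ->]; rewrite !entry_mk //.
  crush; move=> /= *; lia.
crush; move=> /= *; lia.
Qed.
End Mk.

Lemma row_mk b i j k : 0 < k <= b.+2 -> row_of (mk b i j) k = (g b i j k).1.
Proof. by move=> H; rewrite /row_of nth_mk; [congr (g _ _ _ _).1; lia | lia]. Qed.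

Lemma swap_mk b i j k i' j' : 0 < k < b.+2 ->
  (forall p, p < b.+2 -> g b i j (if p == k.-1 then k else if p == k then k.-1 else p).+1
                         = g b i' j' p.+1) ->
  swap_vals (mk b i j) k = mk b i' j'.
Proof.
move=> Hk H; apply: (@eq_from_nth _ (0,0)); first by rewrite size_map size_iota !size_mk.
move=> p; rewrite size_map size_iota size_mk => Hp.
rewrite (nth_map 0) ?size_iota ?size_mk // nth_iota ?size_mk // add0n.
rewrite [RHS]nth_mk // -H // nth_mk //; case: ifP => _; [lia|case: ifP => _; lia].
Qed.

Lemma swapA b i j : 1 < i -> valid b i j -> swap_vals (mk b i j) i.-1 = mk b i.-1 j.
Proof.
move=> Hi /and3P [V1 V2 V3]; apply: swap_mk; first lia.
move=> p Hp; repeat (case: ifP => /eqP ?); crush.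
Qed.

Lemma swapB b i j : j < b.+2 -> valid b i j -> swap_vals (mk b i j) j = mk b i j.+1.
Proof.
move=> Hj /and3P [V1 V2 V3]; apply: swap_mk; first lia.
move=> p Hp; repeat (case: ifP => /eqP ?); crush.
Qed.

Lemma piA b i j : 1 < i -> valid b i j -> pi_op i.-1 (mk b i j) = Some (mk b i.-1 j).
Proof.
move=> Hi V; move: (V) => /and3P [V1 V2 V3].
rewrite /pi_op !row_mk; try lia.
have -> : i.-1.+1 = i by lia.
rewrite g_i /g ifN_eq ?ifN_eq /=; try (apply/eqP; lia).
by rewrite swapA.
Qed.

Lemma piB b i j : j < b.+2 -> valid b i j -> pi_op j (mk b i j) = Some (mk b i j.+1).
Proof.
move=> Hj V; move: (V) => /and3P [V1 V2 V3].
rewrite /pi_op !row_mk; try lia.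
rewrite g_j // /g ifN_eq ?ifN_eq /=; try (apply/eqP; lia).
by rewrite swapB.
Qed.

Lemma pi_step b i j k w' : valid b i j -> 0 < k < b.+2 -> pi_op k (mk b i j) = Some w' ->
  exists i' j', [/\ valid b i' j', i' <= i, j <= j' & w' = mk b i' j'].
Proof.
move=> V Hk; move: (V) => /and3P [V1 V2 V3].
case: (eqVneq k.+1 i) => [Ei|Ni].
  have Hi : 1 < i by lia.
  have -> : k = i.-1 by lia.
  rewrite piA // => [[<-]]; exists i.-1, j; split => //; try lia.
  rewrite /valid; apply/and3P; split; lia.
case: (eqVneq k j) => [Ej|Nj].
  rewrite Ej piB; try lia; move=> [<-]; exists i, j.+1; split => //; try lia.
  rewrite /valid; apply/and3P; split; lia.
rewrite /pi_op !row_mk; try lia.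
case: ifP => _; first by move=> [<-]; exists i, j.
have : ~~ ((g b i j k.+1).1 < (g b i j k).1).
  by rewrite -leqNgt; crush.
by move/negbTE => ->.
Qed.

Lemma reach_fwd b ps i j w' : valid b i j -> apply_pis ps (mk b i j) = Some w' ->
  exists i' j', [/\ valid b i' j', i' <= i, j <= j' & w' = mk b i' j'].
Proof.
elim: ps i j => [|k ps IH] i j V /=; first by move=> [<-]; exists i, j.
rewrite ?size_mk ?size_map ?size_iota; case: ifP => // Hk.
case E: pi_op => [w1|] // H.
have [i1 [j1 [V1 l1 l2 E1]]] := pi_step V Hk E.
rewrite E1 in H.
have [i2 [j2 [V2 l3 l4 E2]]] := IH _ _ V1 H.
exists i2, j2; split => //; lia.
Qed.

Lemma apply_cat ps qs w w1 w2 : apply_pis ps w = Some w1 -> apply_pis qs w1 = Some w2 ->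
  apply_pis (ps ++ qs) w = Some w2.
Proof.
elim: ps w => [|k ps IH] w /=; first by move=> [->].
case: ifP => // _; case: pi_op => // w3; exact: IH.
Qed.

Lemma tab_trans x y z : tab_le x y -> tab_le y z -> tab_le x z.
Proof. move=> [p1 H1] [p2 H2]; exists (p1 ++ p2); exact: apply_cat H1 H2. Qed.

Lemma reach_bwd b i j i' j' : valid b i j -> valid b i' j' -> i' <= i -> j <= j' ->
  tab_le (mk b i j) (mk b i' j').
Proof.
move=> V V' l1 l2; move: (V) (V') => /and3P [V1 V2 V3] /and3P [V1' V2' V3'].
have A : forall d, d <= i - i' -> tab_le (mk b i j) (mk b (i - d) j).
  elim=> [|d IH] Hd; first by exists [::]; rewrite subn0.
  apply: tab_trans (IH (ltnW Hd)) _.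
  exists [:: (i - d).-1] => /=; rewrite ?size_mk ?size_map ?size_iota.
  have Vd : valid b (i - d) j by apply/and3P; split; lia.
  rewrite ifT; last by apply/andP; split; lia.
  rewrite piA //; last lia.
  by congr (Some (mk _ _ _)); lia.
have B : forall d, d <= j' - j -> tab_le (mk b i' j) (mk b i' (j + d)).
  elim=> [|d IH] Hd; first by exists [::]; rewrite addn0.
  apply: tab_trans (IH (ltnW Hd)) _.
  exists [:: j + d] => /=; rewrite ?size_mk ?size_map ?size_iota.
  have Vd : valid b i' (j + d) by apply/and3P; split; lia.
  rewrite ifT; last by apply/andP; split; lia.
  rewrite piB //; last lia.
  by congr (Some (mk _ _ _)); lia.
apply: tab_trans (A (i - i') (leqnn _)) _.
have -> : i - (i - i') = i' by lia.
have := B (j' - j) (leqnn _).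
by have -> : j + (j' - j) = j' by lia.
Qed.
Import GRing.Theory.

Lemma SET_mkE b w : SETb b w -> valid b (eb b w) (et b w) /\ w = mk b (eb b w) (et b w).
Proof.
move=> Hw; have [/andP [H1 H2] H3] := code_range Hw.
have V : valid b (eb b w) (et b w) by apply/and3P.
split => //; apply: (Suniqueness Hw (SET_mk V)).
  by rewrite eb_mk.
by rewrite et_mk.
Qed.

Lemma tab_le_iff b w w' : SETb b w -> SETb b w' ->
  tab_le w w' <-> (eb b w' <= eb b w /\ et b w <= et b w').
Proof.
move=> Hw Hw'; have [V E] := SET_mkE Hw; have [V' E'] := SET_mkE Hw'.
split.
  move=> [ps]; rewrite {1}E => /(reach_fwd V) [i' [j' [V1 l1 l2 E2]]].
  by rewrite E2 eb_mk // et_mk.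
move=> [l1 l2]; rewrite E E'; exact: reach_bwd.
Qed.

Local Open Scope ring_scope.

Definition Yc (n : nat) (C : nat -> nat) (t : nat) : int :=
  if (0 < t < n)%N then (C t)%:Z else 0.

Lemma sum_simple n (C : nat -> nat) t : (0 < t <= n)%N ->
  \sum_(1 <= k < n) (C k)%:Z * simple_root k t = Yc n C t - Yc n C t.-1.
Proof.
move=> Ht.
have E : forall k, (C k)%:Z * simple_root k t =
   (if k == t then (C k)%:Z else 0) - (if k == t.-1 then (C k)%:Z else 0).
  move=> k; rewrite /simple_root /root_vec /=.
  have -> : (t == k.+1) = (k == t.-1) by apply/eqP/eqP; lia.
  rewrite eq_sym; case: (k == t); case: (k == t.-1) => /=; lia.
rewrite (eq_bigr _ (fun k _ => E k)) sumrB -!big_mkcond /= !big_nat1_eq /Yc.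
case: (t =P 1%N) => [->|Nt] /=.
  by case: ifP.
have -> : (1 <= t.-1 < n)%N = true by apply/andP; split; lia.

by [].
Qed.

Lemma root_le_iff n a bb c dd : (0 < a < bb)%N -> (bb <= n)%N -> (0 < c < dd)%N -> (dd <= n)%N ->
  root_le n (a, bb) (c, dd) <-> (c <= a /\ bb <= dd)%N.
Proof.
move=> H1 H2 H3 H4; split.
  move=> [C HC].
  have H : forall t, (0 < t <= n)%N ->
      root_vec (c, dd) t - root_vec (a, bb) t = Yc n C t - Yc n C t.-1.
    by move=> t Ht; rewrite -sum_simple //; exact: HC.
  split.
    case: (leqP c a) => // lt.
    have Z : forall t, (t < a)%N -> Yc n C t = 0.
      elim=> [|t IH] Ht; first by rewrite /Yc.
      have Ht' : (0 < t.+1 <= n)%N by lia.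
      have := H t.+1 Ht'; rewrite /= (IH (ltnW Ht)).
      rewrite /root_vec /=; lia.
    have Ha : (0 < a <= n)%N by lia.
    have := H a Ha; rewrite (Z a.-1); last lia.
    rewrite /Yc /root_vec /=; case: ifP => _; lia.
  case: (leqP bb dd) => // lt.
  have Z : forall m, (m <= n - bb)%N -> Yc n C (n - m) = 0.
    elim=> [|m IH] Hm; first by rewrite subn0 /Yc ltnn andbF.
    have Ht' : (0 < n - m <= n)%N by lia.
    have := H (n - m)%N Ht'; rewrite (IH (ltnW Hm)).
    have -> : ((n - m).-1 = n - m.+1)%N by lia.
    rewrite /root_vec /=; lia.
  have Hb : (0 < bb <= n)%N by lia.
  have := H bb Hb; have := Z (n - bb)%N (leqnn _); rewrite subKn // => ->.
  rewrite /Yc /root_vec /=; case: ifP => _; lia.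
move=> [l1 l2]; exists (fun k => ((c <= k < a) + (bb <= k < dd))%N) => t Ht.
rewrite sum_simple // /Yc /root_vec /=; case: ifP => ?; case: ifP => ?; lia.
Qed.
Local Close Scope ring_scope.

Lemma sum_count (s : seq nat) x :
  \sum_(j < size s) (nth 0 s j < x) = count (fun y => y < x) s.
Proof.
elim: s => [|y s IH]; first by rewrite big_ord0.
by rewrite /= big_ord_recl /= IH.
Qed.

Lemma inv_cons x s : inversions (x :: s) = count (fun y => y < x) s + inversions s.
Proof.
rewrite /inversions /= big_ord_recl /= big_ord0 add0n.
under eq_bigr => j _ do rewrite big_ord_recl /=.
by rewrite big_split /= sum_count.
Qed.

Lemma inv_dec (D : seq nat) e : sorted (fun x y => y < x) D ->
  inversions (D ++ [:: e]) = 'C(size D, 2) + count (fun y => e < y) D.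
Proof.
elim: D => [|y D IH] /=; first by rewrite /inversions big_ord1 big_ord0.
move=> H; have := H; rewrite (path_sortedE (fun m a c (h1 : m < a) (h2 : c < m) => ltn_trans h2 h1)).
move=> /andP [Hall HD].
rewrite inv_cons IH // count_cat /= addn0.
have -> : count (fun y0 => y0 < y) D = size D.
  by apply/eqP; rewrite -all_count.
rewrite binS bin1; lia.
Qed.

Lemma inv_SET b w : SETb b w -> et b w = (eb b w).+1 ->
  inv_tab (al b) (be b) w = b.+1 + 'C(b, 2).
Proof.
move=> Hw He.
rewrite /inv_tab /reading_word rcellsE /= map_cat map_rev.
have -> : [seq entry w x | x <- [seq (2, c) | c <- iota 2 b]] = L b w by rewrite -map_comp.
rewrite -/(et b w) -/(eb b w) He inv_cons inv_dec; last by rewrite rev_sorted; exact: L_sorted.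
rewrite count_cat size_rev /= size_map size_iota.
set D := rev (L b w).
have HD : size D = b by rewrite size_rev size_map size_iota.
have := count_predC (fun y => y < (eb b w).+1) D.
have -> : count (predC (fun y => y < (eb b w).+1)) D = count (fun y => eb b w < y) D.
  by apply: eq_count => y /=; rewrite ltnS -ltnNge.
rewrite -/(eb b w) ltnSn HD; lia.
Qed.

Fixpoint pairs m : seq (nat * nat) :=
  match m with 0 => [::] | m'.+1 => pairs m' ++ [seq (i, m'.+1) | i <- iota 1 m'] end.

Lemma size_pairs m : size (pairs m) = 'C(m, 2).
Proof.
elim: m => [|m IH] //=; rewrite size_cat size_map size_iota IH.
by rewrite [RHS]binS bin1.
Qed.

Lemma mem_pairs m p : (p \in pairs m) = (0 < p.1 < p.2) && (p.2 <= m).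
Proof.
case: p => x y; elim: m => [|m IH] /=; first by rewrite in_nil; apply/esym/andP; case=> ? ?; lia.
rewrite mem_cat IH /=.
apply/orP/andP => [[/andP [? ?]|/mapP [z Hz [-> ->]]]|[? ?]]; first (split => //; lia).
  by move: Hz; rewrite mem_iota => ?; split; lia.
case: (ltnP y m.+1) => ?; [left; apply/andP; split => //; lia|].
right; apply/mapP; exists x; first by rewrite mem_iota; lia.
by congr pair; lia.
Qed.

Lemma uniq_pairs m : uniq (pairs m).
Proof.
elim: m => [|m IH] //=; rewrite cat_uniq IH /= map_inj_uniq ?iota_uniq ?andbT; last by move=> ? ? [].
apply/hasPn => p /mapP [z _ ->]; rewrite mem_pairs /=; lia.
Qed.

Lemma min_char b w : minimal (SETb b) tab_le w <-> SETb b w /\ et b w = (eb b w).+1.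
Proof.
split.
  move=> [Hw Hmin]; split => //.
  have [/andP [h1 h2] h3] := code_range Hw.
  case: (eqVneq (et b w) (eb b w).+1) => // Ne.
  have Vy : valid b (eb b w).+1 (et b w) by apply/and3P; split; lia.
  have Hy := SET_mk Vy.
  have : tab_le (mk b (eb b w).+1 (et b w)) w.
    by apply/(tab_le_iff Hy Hw); rewrite eb_mk // et_mk //; split; lia.
  move/(Hmin _ Hy) => Eyw; have := eb_mk Vy; rewrite Eyw; lia.
move=> [Hw He]; split => // y Hy /(tab_le_iff Hy Hw) [l1 l2].
have [/andP [h1 h2] h3] := code_range Hy.
apply: (Suniqueness Hy Hw); lia.
Qed.

Theorem proposition5p2 (n : nat) :
  3 <= n ->
  (forall i j, 1 <= i -> i < j -> j <= n -> exists! w, is_M n j i w) /\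
  order_iso (lobSET n) tab_le (is_pos_root n) (root_le n) /\
  order_iso (lobSET n) tab_le (grid n) grid_le /\
  (exists s : seq (seq cell), uniq s /\ size s = n - 1 /\
     forall w, w \in s <-> minimal (lobSET n) tab_le w) /\
  (forall w, minimal (lobSET n) tab_le w <->
     exists i, [/\ 1 <= i, i <= n - 1 & is_M n i.+1 i w]) /\
  (forall w w', minimal (lobSET n) tab_le w -> minimal (lobSET n) tab_le w' ->
     lob_inv n w = lob_inv n w') /\
  (exists s : seq (seq cell), uniq s /\ size s = 'C(n, 2) /\
     forall w, w \in s <-> lobSET n w).
Proof.
move=> Hn; have [b ->] : exists b, n = b.+2 by exists (n - 2); lia.
have E2 : b.+2 - 2 = b by lia.
have LS : lobSET b.+2 = SETb b by rewrite /lobSET E2.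
have LI : forall w, lob_inv b.+2 w = inv_tab (al b) (be b) w by move=> w; rewrite /lob_inv E2.
have LM : forall j i w, is_M b.+2 j i w <-> [/\ SETb b w, et b w = j & eb b w = i].
  move=> j i w; rewrite /is_M /top_claw /bottom_claw E2 LS.
  by split => [[? [? ?]]|[? ? ?]].
rewrite LS.
have Hv : forall i j, 1 <= i -> i < j -> j <= b.+2 -> valid b i j.
  by move=> i j *; apply/and3P; split; lia.
split.
  move=> i j Hi Hij Hj; have V := Hv _ _ Hi Hij Hj.
  exists (mk b i j); split; first by apply/LM; split; [exact: SET_mk | exact: et_mk | exact: eb_mk].
  move=> w' /LM [Hw' E1 E3]; apply: (Suniqueness (SET_mk V) Hw').
    by rewrite eb_mk.
  by rewrite et_mk.
split.
  exists (fun w => (eb b w, et b w)); split; [|split; [|split]].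
  - by move=> w Hw; have [/andP [? ?] ?] := code_range Hw; rewrite /is_pos_root /=; split; lia.
  - move=> w w' Hw Hw' E; apply: (Suniqueness Hw Hw'); [exact: (congr1 fst E) | exact: (congr1 snd E)].
  - move=> [i j] [/andP [Hi Hij] Hj] /=; have V := Hv _ _ Hi Hij Hj.
    by exists (mk b i j); [exact: SET_mk | rewrite eb_mk // et_mk].
  move=> w w' Hw Hw'; rewrite (tab_le_iff Hw Hw').
  have [/andP [? ?] ?] := code_range Hw; have [/andP [? ?] ?] := code_range Hw'.
  rewrite root_le_iff; try lia; by split => -[? ?]; split.
split.
  exists (fun w => (eb b w - 1, b.+2 - et b w)); split; [|split; [|split]].
  - by move=> w Hw; have [/andP [? ?] ?] := code_range Hw; rewrite /grid /=; lia.
  - move=> w w' Hw Hw' E; have /= E1 := congr1 fst E; have /= E3 := congr1 snd E.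
    have [/andP [? ?] ?] := code_range Hw; have [/andP [? ?] ?] := code_range Hw'.
    apply: (Suniqueness Hw Hw'); lia.
  - move=> [x y]; rewrite /grid /= => H.
    have V : valid b x.+1 (b.+2 - y) by apply/and3P; split; lia.
    exists (mk b x.+1 (b.+2 - y)); first exact: SET_mk.
    rewrite eb_mk // et_mk //; congr pair; lia.
  move=> w w' Hw Hw'; rewrite (tab_le_iff Hw Hw') /grid_le /=.
  have [/andP [? ?] ?] := code_range Hw; have [/andP [? ?] ?] := code_range Hw'.
  split => -[? ?]; split; lia.
split.
  exists [seq mk b i i.+1 | i <- iota 1 b.+1]; split; last split.
  - rewrite map_inj_in_uniq ?iota_uniq // => x y; rewrite !mem_iota => Hx Hy E.
    have Vx : valid b x x.+1 by apply: Hv; lia.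
    have Vy : valid b y y.+1 by apply: Hv; lia.
    by rewrite -(eb_mk Vx) E eb_mk.
  - by rewrite size_map size_iota; lia.
  move=> w; rewrite min_char; split.
    move=> /mapP [i Hi ->]; move: Hi; rewrite mem_iota => Hi.
    have V : valid b i i.+1 by apply: Hv; lia.
    by split; [exact: SET_mk | rewrite eb_mk // et_mk].
  move=> [Hw He]; have [/andP [? ?] ?] := code_range Hw.
  have [V E] := SET_mkE Hw.
  apply/mapP; exists (eb b w); first by rewrite mem_iota; lia.
  by rewrite {1}E He.
split.
  move=> w; rewrite min_char; split.
    move=> [Hw He]; have [/andP [? ?] ?] := code_range Hw.
    exists (eb b w); split; try lia; exact/LM.
  by move=> [i [? ? /LM [Hw E1 E3]]]; split => //; rewrite E1 E3.
split.
  move=> w w' /min_char [Hw He] /min_char [Hw' He'].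
  by rewrite !LI !inv_SET.
exists [seq mk b p.1 p.2 | p <- pairs b.+2]; split; last split.
- rewrite map_inj_in_uniq ?uniq_pairs // => -[x1 y1] [x2 y2]; rewrite !mem_pairs /= => H1 H2 E.
  have V1 : valid b x1 y1 by apply/and3P; split; lia.
  have V2 : valid b x2 y2 by apply/and3P; split; lia.
  have A := eb_mk V1; have B := et_mk V1; rewrite E eb_mk // in A; rewrite E et_mk // in B; by rewrite A B.
- by rewrite size_map size_pairs.
move=> w; split.
  move=> /mapP [[x y]]; rewrite mem_pairs /= => H ->.
  by apply: SET_mk; apply/and3P; split; lia.
move=> Hw; have [V E] := SET_mkE Hw; have [/andP [? ?] ?] := code_range Hw.
apply/mapP; exists (eb b w, et b w) => //.
by rewrite mem_pairs /=; lia.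
Qed.
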